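(* Let $\mathbf{M}$ be the canonical adjacency matrix of a connected graph $G$ on $n\ge 2$ vertices. Then the $(n-1)\times(n-1)$ matrix obtained from $\mathbf{M}$ by deleting its last row and last column is the canonical adjacency matrix of a connected graph (namely the subgraph of $G$ induced by all vertices but the last one in the ordering of $\mathbf{M}$). In particular, the vertex corresponding to the last row/column of $\mathbf{M}$ is not a cut vertex of $G$.
   Context: For an $n\times n$ adjacency matrix $\mathbf{M}$ of a finite simple graph (with respect to some ordering of its vertices), its bit-string is obtained by concatenating the entries strictly above the diagonal column by column, left to right, reading each column from top to bottom. The canonical adjacency matrix of a graph $G$ is the unique adjacency matrix of $G$ (over all orderings of its vertices) whose bit-string is lexicographically greatest. It is known that deleting the last row and column of a canonical adjacency matrix of $G$ yields the canonical adjacency matrix of the corresponding induced subgraph. *)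

(* Defs.v *)
From mathcomp Require Import all_boot all_order all_algebra.
Set Implicit Arguments. Unset Strict Implicit. Unset Printing Implicit Defensive.

Definition simple_graph (T : finType) (e : rel T) : Prop :=
  symmetric e /\ irreflexive e.

Definition connected_graph (T : finType) (e : rel T) : Prop :=
  forall x y : T, connect e x y.

Definition adjmx (T : finType) (e : rel T) (n : nat) (f : 'I_n -> T) : 'M[bool]_n :=
  \matrix_(i, j) e (f i) (f j).

(* Bit-string: entries strictly above the diagonal, column by column
   (left to right), each column top to bottom. *)
Definition bitstring (n : nat) (M : 'M[bool]_n) : seq bool :=
  flatten [seq [seq M i j | i : 'I_n <- enum 'I_n & (nat_of_ord i < nat_of_ord j)%N] | j <- enum 'I_n].

Fixpoint lexle (s t : seq bool) : bool :=
  match s, t with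
  | [::], _ => true
  | _ :: _, [::] => false
  | x :: s', y :: t' => (~~ x && y) || ((x == y) && lexle s' t')
  end.

Definition canonical_adj (T : finType) (e : rel T) (n : nat) (M : 'M[bool]_n) : Prop :=
  (exists f : 'I_n -> T, bijective f /\ M = adjmx e f) /\
  (forall g : 'I_n -> T, bijective g -> lexle (bitstring (adjmx e g)) (bitstring M)).

Definition del_vertex (T : finType) (v : T) : finType := {x : T | x != v}.
Definition del_rel (T : finType) (e : rel T) (v : T) : rel (del_vertex v) :=
  fun x y => e (val x) (val y).

Definition del_last (n : nat) (M : 'M[bool]_n.+1) : 'M[bool]_n :=
  \matrix_(i, j) M (widen_ord (leqnSn n) i) (widen_ord (leqnSn n) j).
Arguments del_rel {T} e v _ _.
Arguments del_vertex {T} v.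

(* Main.v *)
Require Import Defs.
From mathcomp Require Import all_boot all_order all_algebra all_fingroup.
Set Implicit Arguments. Unset Strict Implicit. Unset Printing Implicit Defensive.

Lemma lexle_cat_same s t u : lexle (s ++ t) (s ++ u) = lexle t u.
Proof. by elim: s => //= x s ->; rewrite eqxx /=; case: x. Qed.

Lemma lexle_cat_lt a b x y : size a = size b -> ~~ lexle a b ->
  ~~ lexle (a ++ x) (b ++ y).
Proof.
elim: a b => [|c a IH] [|d b] //= [Hs]; case: c; case: d => //=; exact: IH.
Qed.

Lemma lexle_zero a b : size a = size b -> all negb b -> has id a -> ~~ lexle a b.
Proof.
elim: a b => [|c a IH] [|d b] //= [Hs] /andP[Hd Hb]; rewrite (negbTE Hd).
case: c => /= [//|Ha]; exact: IH.
Qed.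

Lemma lex_flat (I : eqType) (s : seq I) (F G : I -> seq bool) x :
  x \in s -> (forall y, (index y s < index x s)%N -> F y = G y) ->
  size (F x) = size (G x) -> ~~ lexle (F x) (G x) ->
  ~~ lexle (flatten (map F s)) (flatten (map G s)).
Proof.
elim: s => [|z s IH] //= Hx Hy Hs Hl.
case: (eqVneq z x) => [Ezx|nzx].
  by subst z; apply: lexle_cat_lt; rewrite -?Hs -?Hl //= ?eqxx.
move: Hx; rewrite in_cons eq_sym (negbTE nzx) /= => Hx.
have Hz : F z = G z by apply: Hy; rewrite /= eqxx (negbTE nzx).
rewrite Hz lexle_cat_same; apply: IH => // y Hy'.
case: (eqVneq z y) => [<-|nzy]; first by [].
by apply: Hy; rewrite /= (negbTE nzx) (negbTE nzy) ltnS.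
Qed.

Definition colj n (A : 'M[bool]_n) (j : 'I_n) :=
  [seq A i j | i : 'I_n <- enum 'I_n & (nat_of_ord i < nat_of_ord j)%N].

Lemma bitstringE n (A : 'M[bool]_n) : bitstring A = flatten (map (colj A) (enum 'I_n)).
Proof. by []. Qed.

Lemma size_bitstring n (A B : 'M[bool]_n) : size (bitstring A) = size (bitstring B).
Proof.
rewrite !bitstringE !size_flatten /shape -!map_comp; congr sumn.
by apply: eq_map => j /=; rewrite /colj !size_map.
Qed.

Lemma bitstring_last n (A : 'M[bool]_n.+1) :
  bitstring A = bitstring (del_last A) ++ colj A ord_max.
Proof.
rewrite !bitstringE enum_ordSr map_rcons flatten_rcons; congr (_ ++ _).
rewrite -map_comp; congr flatten; apply: eq_map => j /=.
rewrite /colj enum_ordSr filter_rcons /= ltnNge (ltnW (ltn_ord j)) /=.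
rewrite filter_map -map_comp; apply: eq_map => i /=.
by rewrite mxE.
Qed.
Lemma cross (T : finType) (e : rel T) (P : pred T) x p :
  path e x p -> P x -> ~~ P (last x p) -> exists a b, [&& P a, ~~ P b & e a b].
Proof.
elim: p x => [|y p IH] x /=; first by move=> _ ->.
move=> /andP[exy Hp] Px Hl.
case Py: (P y); first exact: IH Hp Py Hl.
by exists x, y; rewrite Px Py exy.
Qed.

Lemma ord_lt_neq n (i j : 'I_n) : (i < j)%N -> j != i.
Proof. by move=> h; apply/eqP => E; move: h; rewrite E ltnn. Qed.

Lemma earlier_nb (T : finType) (e : rel T) n (f : 'I_n.+1 -> T) :
  connected_graph e -> bijective f ->
  (forall g : 'I_n.+1 -> T, bijective g -> lexle (bitstring (adjmx e g)) (bitstring (adjmx e f))) ->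
  forall j : 'I_n.+1, (0 < j)%N -> exists2 i : 'I_n.+1, (i < j)%N & e (f i) (f j).
Proof.
move=> Hc Hf Hcan j j0.
case: (boolP [exists i : 'I_n.+1, (i < j)%N && e (f i) (f j)]).
  by move/existsP=> [i /andP[]]; exists i.
move=> H; exfalso.
have H' : forall i : 'I_n.+1, (i < j)%N -> e (f i) (f j) = false.
  move=> i ij; apply/negP => E; move/existsP: H; apply; exists i; by rewrite ij E.
case: Hf => g fK gK.
have /connectP [p Hp Hl] := Hc (f ord0) (f j).
have := cross (P := fun z => (g z < j)%N) Hp.
rewrite /= -Hl !fK ltnn => /(_ j0 isT) [a [b /and3P[Pa Pb eab]]].
set i := g a in Pa; set k := g b in Pb.
have Ea : f i = a by rewrite /i gK.
have Eb : f k = b by rewrite /k gK.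
case: (eqVneq k j) => [Ekj|nkj].
  by move: (H' i Pa); rewrite -Ekj Ea Eb eab.
have jk : (j < k)%N by rewrite ltn_neqAle leqNgt Pb andbT; apply/eqP => E;
  move/eqP: nkj; apply; apply: val_inj.
have Hb : bijective (f \o (tperm j k)).
  apply: bij_comp; first by exists g.
  by exists (tperm j k) => x; rewrite tpermK.
move: (Hcan _ Hb); apply/negP.
rewrite !bitstringE; apply: (lex_flat (x := j)); first by rewrite mem_enum.
- move=> y; rewrite !index_enum_ord => yj.
  rewrite /colj; apply/eq_in_map => i'; rewrite mem_filter => /andP[iy _].
  rewrite !mxE /= !tpermD //; apply: ord_lt_neq => //.
  + exact: ltn_trans yj jk.
  + exact: ltn_trans iy yj.
  + exact: ltn_trans (ltn_trans iy yj) jk.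
- by rewrite /colj !size_map.
- apply: lexle_zero; first by rewrite /colj !size_map.
  + apply/allP => z /mapP [i' ]; rewrite mem_filter => /andP[ij _] ->.
    by rewrite mxE H'.
  + apply/hasP; exists (adjmx e (f \o tperm j k) i j).
      by apply: map_f; rewrite mem_filter Pa mem_enum.
    rewrite mxE /= tpermL tpermD ?Ea ?Eb //; apply: ord_lt_neq => //.
    exact: ltn_trans Pa jk.
Qed.
Lemma unlift_widen n (i : 'I_n) : unlift ord_max (widen_ord (leqnSn n) i) = Some i.
Proof.
have -> : widen_ord (leqnSn n) i = lift ord_max i by apply: val_inj; exact: (esym (lift_max i)).
by rewrite liftK.
Qed.

Lemma widen_neq_max n (i : 'I_n) : widen_ord (leqnSn n) i != ord_max.
Proof. by apply/eqP => /(congr1 val) /= E; move: (ltn_ord i); rewrite E ltnn. Qed.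

Lemma fw_neq (T : finType) n (f : 'I_n.+1 -> T) (H : injective f) (i : 'I_n) :
  f (widen_ord (leqnSn n) i) != f ord_max.
Proof. by rewrite (inj_eq H) widen_neq_max. Qed.

Definition fres (T : finType) n (f : 'I_n.+1 -> T) (H : injective f) (i : 'I_n) :
  del_vertex (f ord_max) := exist (fun x => x != f ord_max) _ (fw_neq H i).

Theorem mainTheorem7 (T : finType) (e : rel T) (n : nat)
  (M : 'M[bool]_n.+1) (f : 'I_n.+1 -> T) :
  simple_graph e -> connected_graph e -> #|T| = n.+1 -> (1 <= n)%N ->
  bijective f -> M = adjmx e f -> canonical_adj e M ->
  canonical_adj (del_rel e (f ord_max)) (del_last M) /\
  connected_graph (del_rel e (f ord_max)).
Proof.
move=> [esym eirr] Hc HT n1 Hf EM [_ Hcan].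
have Hinj := bij_inj Hf.
set v := f ord_max.
have EdM : del_last M = adjmx (del_rel e v) (fres Hinj).
  by apply/matrixP => i j; rewrite EM !mxE.
split.
  split.
    exists (fres Hinj); split => //.
    apply: inj_card_bij.
      move=> i j /(congr1 val) /= /Hinj /(congr1 val) /= E; exact: val_inj.
    by rewrite card_sig cardC1 HT card_ord.
  move=> g' Hg'; apply/negPn/negP => H.
  pose gx (i : 'I_n.+1) := if unlift ord_max i is Some i' then val (g' i') else v.
  have Hgx : bijective gx.
    apply: inj_card_bij; last by rewrite card_ord HT.
    move=> i1 i2; rewrite /gx.
    case: unliftP => [i1'|] ->; case: unliftP => [i2'|] -> //.
    - by move/val_inj/(bij_inj Hg') => ->.
    - by move=> E; move: (valP (g' i1')); rewrite E eqxx.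
    - by move=> E; move: (valP (g' i2')); rewrite -E eqxx.
  have Edg : del_last (adjmx e gx) = adjmx (del_rel e v) g'.
    by apply/matrixP => i j; rewrite !mxE /gx !unlift_widen.
  move: (Hcan _ Hgx); apply/negP.
  rewrite (bitstring_last (adjmx e gx)) (bitstring_last M) Edg.
  apply: lexle_cat_lt; first exact: size_bitstring.
  exact: H.
have Hnb := earlier_nb Hc Hf (ltac:(by rewrite -EM)).
case: (Hf) => g fK gK.
have ne0 : f ord0 != v.
  by rewrite /v (inj_eq Hinj); apply/eqP => /(congr1 val) /= E; rewrite -E in n1.
pose u0 : del_vertex v := exist (fun x => x != v) _ ne0.
have Rsym : symmetric (del_rel e v) by move=> x y; rewrite /del_rel esym.
have key : forall m (u : del_vertex v), val (g (val u)) = m -> connect (del_rel e v) u0 u.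
  elim/ltn_ind => m IH u Eu.
  case: (posnP m) => [m0|mpos].
    have : g (val u) = ord0 by apply: val_inj; rewrite Eu m0.
    move/(congr1 f); rewrite gK => E.
    by have -> : u = u0 by apply: val_inj; rewrite /= E.
  have [i ij eij] := Hnb (g (val u)) (ltac:(by rewrite Eu)).
  have nei : f i != v.
    rewrite /v (inj_eq Hinj); apply/eqP => E; move: ij; rewrite E.
    by rewrite ltnNge -ltnS ltn_ord.
  pose w : del_vertex v := exist (fun x => x != v) _ nei.
  apply: connect_trans (IH (g (f i)) _ w erefl) _.
    by rewrite fK -Eu.
  by apply: connect1; move: eij; rewrite gK.
move=> x y; apply: connect_trans (key _ y erefl).
by rewrite (sym_connect_sym Rsym); exact: key _ x erefl.
Qed.
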